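(* Let $\tilde\rho:\mathbb Z_{(2)}[[x,y,z]]\to\mathbb Z_{(2)}[[t]]$ be the ring morphism with $\tilde\rho(x)=t^6+t^{31}$, $\tilde\rho(y)=t^8$, $\tilde\rho(z)=t^{10}$ and $\tilde P=\ker\tilde\rho$. Then $\varphi=z^2+x^2y+y^5z^3\notin \tilde P+2\,\mathbb Z_{(2)}[[x,y,z]]$. Consequently, the kernel $\overline P$ of the analogous morphism $(\mathbb Z/2\mathbb Z)[[x,y,z]]\to(\mathbb Z/2\mathbb Z)[[t]]$ is not contained in the image of $\tilde P$ in $(\mathbb Z/2\mathbb Z)[[x,y,z]]$.
   Context: $\mathbb Z_{(2)}$ denotes the localization of $\mathbb Z$ at the prime ideal $(2)$. The morphism $(\mathbb Z/2\mathbb Z)[[x,y,z]]\to(\mathbb Z/2\mathbb Z)[[t]]$ sends $x\mapsto t^6+t^{31}$, $y\mapsto t^8$, $z\mapsto t^{10}$. *)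

(* Defs.v *)
From HB Require Import structures.
From mathcomp Require Import all_boot all_order all_algebra.
Set Implicit Arguments. Unset Strict Implicit. Unset Printing Implicit Defensive.
Import Order.TTheory GRing.Theory Num.Theory.
Local Open Scope ring_scope.

(* A formal power series in x,y,z with coefficients in R, given by its
   coefficient function: f i j k = coefficient of x^i y^j z^k. *)
Definition series3 (R : Type) := nat -> nat -> nat -> R.

(* Z_(2) = rationals with odd denominator (localization of Z at (2)),
   viewed inside Q. *)
Definition inZ2loc (q : rat) : bool := odd (absz (denq q)).

Definition isZ2series (f : series3 rat) : Prop := forall i j k, inZ2loc (f i j k).

Definition mono3 (R : pzRingType) (a b c : nat) : series3 R :=
  fun i j k => ((i == a) && (j == b) && (k == c))%:R.

Definition phi (R : pzRingType) : series3 R :=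
  fun i j k => mono3 R 0 0 2 i j k + mono3 R 2 1 0 i j k + mono3 R 0 5 3 i j k.

(* The substitution morphism x |-> t^6 + t^31, y |-> t^8, z |-> t^10:
   rho f n = coefficient of t^n in
     sum_{i,j,k} f i j k (t^6+t^31)^i t^(8j) t^(10k)
           = sum_{i,j,k} sum_{l<=i} C(i,l) f i j k t^(6(i-l)+31l+8j+10k).
   Only indices i,j,k <= n can contribute, so the sum is finite. *)
Definition rho (R : pzRingType) (f : series3 R) : nat -> R :=
  fun n => \sum_(i < n.+1) \sum_(j < n.+1) \sum_(k < n.+1) \sum_(l < i.+1)
     if (6 * (i - l) + 31 * l + 8 * j + 10 * k == n)%N
     then 'C(i, l)%:R * f i j k else 0.

Definition inPtilde (f : series3 rat) : Prop :=
  isZ2series f /\ forall n, rho f n = 0.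

Definition inPbar (h : series3 'F_2) : Prop := forall n, rho h n = 0.

(* Reduction Z_(2) -> Z/2Z (for q = a/b with b odd, q mod 2 = a mod 2). *)
Definition red2 (q : rat) : 'F_2 := (numq q)%:~R.

(* Main.v *)
Require Import Defs.
From mathcomp Require Import all_boot all_order all_algebra zify.
Import GRing.Theory Num.Theory.
Local Open Scope ring_scope.

Lemma sum_only (R : pzRingType) N (F : 'I_N -> R) (a : 'I_N) :
  (forall i, i != a -> F i = 0) -> \sum_i F i = F a.
Proof. by move=> H; rewrite (bigD1 a) //= big1 ?addr0 // => i /H. Qed.

Lemma cond45 i j k l : (l <= i)%N ->
  (6 * (i - l) + 31 * l + 8 * j + 10 * k = 45)%N ->
  [/\ i = 2, j = 1, k = 0 & l = 1]%N.
Proof. move=> H1 H2; split; lia. Qed.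
Arguments cond45 {i j k l}.

Lemma rho45 (R : pzRingType) (h : series3 R) : rho h 45 = 2 * h 2%N 1%N 0%N.
Proof.
rewrite /rho (@sum_only _ _ _ (@Ordinal 46 2 isT)); last first.
  move=> i ne; apply: big1 => j _; apply: big1 => k _; apply: big1 => l _.
  case: eqP => // /(cond45 (i:=_) (l:=l) (ltn_ord l)) [Hi _ _ _].
  by case/eqP: ne; apply: val_inj.
rewrite (@sum_only _ _ _ (@Ordinal 46 1 isT)); last first.
  move=> j ne; apply: big1 => k _; apply: big1 => l _.
  case: eqP => // /(cond45 (i:=_) (l:=l) (ltn_ord l)) [_ Hj _ _].
  by case/eqP: ne; apply: val_inj.
rewrite (@sum_only _ _ _ (@Ordinal 46 0 isT)); last first.
  move=> k ne; apply: big1 => l _.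
  case: eqP => // /(cond45 (i:=_) (l:=l) (ltn_ord l)) [_ _ Hk _].
  by case/eqP: ne; apply: val_inj.
rewrite (@sum_only _ _ _ (@Ordinal 3 1 isT)); last first.
  move=> l ne.
  case: eqP => // /(cond45 (i:=_) (l:=l) (ltn_ord l)) [_ _ _ Hl].
  by case/eqP: ne; apply: val_inj.
by [].
Qed.

Lemma rho_add (R : pzRingType) (f g : series3 R) n :
  rho (fun i j k => f i j k + g i j k) n = rho f n + rho g n.
Proof.
rewrite /rho -big_split; apply: eq_bigr => i _.
rewrite -big_split; apply: eq_bigr => j _.
rewrite -big_split; apply: eq_bigr => k _.
rewrite -big_split; apply: eq_bigr => l _.
case: ifP => _; first by rewrite mulrDr.
by rewrite /= addr0.
Qed.

Lemma rho_mono (R : pzRingType) a b c n :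
  rho (mono3 R a b c) n = \sum_(l < a.+1)
     if (6 * (a - l) + 31 * l + 8 * b + 10 * c == n)%N
     then 'C(a, l)%:R else 0.
Proof.
have [Ha|Ha] := leqP a n; last first.
  rewrite [RHS]big1 => [|l _]; last by case: eqP => // E; have := ltn_ord l; lia.
  apply: big1 => i _; apply: big1 => j _; apply: big1 => k _; apply: big1 => l _.
  rewrite /mono3; case: (nat_of_ord i =P a) => [E|_]; first by have := ltn_ord i; lia.
  by rewrite /= mulr0 if_same.
have [Hb|Hb] := leqP b n; last first.
  rewrite [RHS]big1 => [|l _]; last by case: eqP => // E; have := ltn_ord l; lia.
  apply: big1 => i _; apply: big1 => j _; apply: big1 => k _; apply: big1 => l _.
  rewrite /mono3; case: (nat_of_ord j =P b) => [E|_]; first by have := ltn_ord j; lia.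
  by rewrite ?andbF /= mulr0 if_same.
have [Hc|Hc] := leqP c n; last first.
  rewrite [RHS]big1 => [|l _]; last by case: eqP => // E; have := ltn_ord l; lia.
  apply: big1 => i _; apply: big1 => j _; apply: big1 => k _; apply: big1 => l _.
  rewrite /mono3; case: (nat_of_ord k =P c) => [E|_]; first by have := ltn_ord k; lia.
  by rewrite ?andbF /= mulr0 if_same.
rewrite /rho (@sum_only _ _ _ (@Ordinal n.+1 a Ha)); last first.
  move=> i ne; apply: big1 => j _; apply: big1 => k _; apply: big1 => l _.
  rewrite /mono3; case: (nat_of_ord i =P a) => [E|_]; first by case/eqP: ne; apply: val_inj.
  by rewrite /= mulr0 if_same.
rewrite (@sum_only _ _ _ (@Ordinal n.+1 b Hb)); last first.
  move=> j ne; apply: big1 => k _; apply: big1 => l _.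
  rewrite /mono3; case: (nat_of_ord j =P b) => [E|_]; first by case/eqP: ne; apply: val_inj.
  by rewrite ?andbF /= mulr0 if_same.
rewrite (@sum_only _ _ _ (@Ordinal n.+1 c Hc)); last first.
  move=> k ne; apply: big1 => l _.
  rewrite /mono3; case: (nat_of_ord k =P c) => [E|_]; first by case/eqP: ne; apply: val_inj.
  by rewrite ?andbF /= mulr0 if_same.
apply: eq_bigr => l _ /=; rewrite /mono3 !eqxx /= mulr1.
by [].
Qed.

Lemma phiF2 : inPbar (phi 'F_2).
Proof.
move=> n; rewrite /phi !rho_add !rho_mono.
rewrite !big_ord_recr !big_ord0 /=.
rewrite -[(6 * (0 - 0) + 31 * 0 + 8 * 0 + 10 * 2)%N]/20%N.
rewrite -[(6 * (2 - 0) + 31 * 0 + 8 * 1 + 10 * 0)%N]/20%N.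
rewrite -[(6 * (2 - 1) + 31 * 1 + 8 * 1 + 10 * 0)%N]/45%N.
rewrite -[(6 * (2 - 2) + 31 * 2 + 8 * 1 + 10 * 0)%N]/70%N.
rewrite -[(6 * (0 - 0) + 31 * 0 + 8 * 5 + 10 * 3)%N]/70%N.
by case: (20 == n)%N; case: (45 == n)%N; case: (70 == n)%N; apply/eqP.
Qed.

Theorem mainTheorem8 :
  (~ exists (f g : series3 rat),
       inPtilde f /\ isZ2series g /\
       forall i j k, phi rat i j k = f i j k + 2 * g i j k)
  /\
  (~ forall h : series3 'F_2, inPbar h ->
       exists f : series3 rat, inPtilde f /\
         forall i j k, h i j k = red2 (f i j k)).
Proof.
split.
  case=> f [g [[_ Hf] [Hg E]]].
  have := Hf 45%N; rewrite rho45 => /eqP; rewrite mulf_eq0 /= => /eqP f0.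
  have := E 2%N 1%N 0%N; rewrite f0 add0r /phi /mono3 /= => Eg.
  rewrite add0r addr0 in Eg.
  have G : g 2%N 1%N 0%N = 2^-1 * 1.
    have Eg' : 2 * g 2%N 1%N 0%N = 1 by rewrite -Eg.
    have nz : (2 : rat) != 0 by [].
    by apply: (mulfI nz); rewrite Eg' mulrA divff // mul1r.
  by move: (Hg 2%N 1%N 0%N); rewrite G.
move=> /(_ _ phiF2) [f [[_ Hf] E]].
have := Hf 45%N; rewrite rho45 => /eqP; rewrite mulf_eq0 /= => /eqP f0.
by have := E 2%N 1%N 0%N; rewrite f0.
Qed.
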